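(* Let $B\subset\mathbb C$ be a Bernstein set. Then there exists a perfectly everywhere surjective function $f:\mathbb C\to\mathbb C$ such that $f(x)=1$ for every $x\in\mathbb C\setminus B$.
   Context: A perfect subset of $\mathbb C$ is a nonempty closed set with no isolated points. A set $B\subset\mathbb C$ is a Bernstein set if both $B$ and $\mathbb C\setminus B$ meet every perfect subset of $\mathbb C$. A function $f:\mathbb C\to\mathbb C$ is perfectly everywhere surjective if $f(P)=\mathbb C$ for every perfect set $P\subset\mathbb C$. *)

(* Defs.v *)
From HB Require Import structures.
From mathcomp Require Import all_boot all_order all_algebra.
From mathcomp Require Import all_classical all_reals all_analysis.
Set Implicit Arguments. Unset Strict Implicit. Unset Printing Implicit Defensive.
Import Order.TTheory GRing.Theory Num.Theory.
Import numFieldNormedType.Exports.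
Local Open Scope classical_set_scope.
Local Open Scope ring_scope.

(* The complex plane, modelled as R x R with the product topology
   (homeomorphic to C); the complex number 1 is (1, 0). *)
Notation cplx R := (R * R)%type (only parsing).
Definition cone (R : realType) : cplx R := (1, 0).

Definition perfect (R : realType) (P : set (cplx R)) : Prop :=
  P !=set0 /\ perfect_set P.

Definition bernstein (R : realType) (B : set (cplx R)) : Prop :=
  forall P : set (cplx R), perfect P -> (B `&` P) !=set0 /\ (~` B `&` P) !=set0.

Definition perfectly_everywhere_surjective (R : realType)
  (f : cplx R -> cplx R) : Prop :=
  forall P : set (cplx R), perfect P -> f @` P = setT.

(* Main.v *)
Require Import Defs.
From mathcomp Require Import all_boot all_order all_algebra.
From mathcomp Require Import all_classical all_reals all_analysis.
From mathcomp Require Import wochoice lra ring zify.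
From Stdlib Require Import ClassicalEpsilon.
Import Order.TTheory GRing.Theory Num.Theory numFieldNormedType.Exports.
Local Open Scope classical_set_scope.
Local Open Scope ring_scope.

Section Transfinite.
Variables (I : eqType) (X : Type) (x0 : X).

Lemma transfinite : exists (J : set I) (c : I -> I),
  injective c /\ (forall i, J (c i)) /\
  forall (G : set I) (C : I -> set X),
   (forall j, J j -> G j -> exists e : I -> X, injective e /\ forall i, C j (e i)) ->
   exists x : I -> X, (forall j, J j -> G j -> C j (x j)) /\
     (forall j j', J j -> G j -> J j' -> G j' -> x j = x j' -> j = j').
Proof.
have [R0 wo] := well_ordering_principle I.
have minP (A : set I) : (exists a, A a) -> exists z, A z /\ forall a, A a -> R0 z a.
  move=> [a Aa].
  have ne : nonempty (fun z => `[< A z >] : bool).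
    by exists a; rewrite inE.
  have [z [[zA lbz] _]] := wo _ ne.
  exists z; split; first by move: zA; rewrite inE.
  by move=> b Ab; apply: lbz; rewrite inE.
have refl a : R0 a a by have [z [-> h]] := minP (eq^~ a) (ex_intro _ a erefl); exact: h.
have tot a b : R0 a b \/ R0 b a.
  have [z [zab h]] := minP (fun z => z = a \/ z = b) (ex_intro _ a (or_introl erefl)).
  by case: zab => <-; [left; apply: h; right|right; apply: h; left].
have anti a b : R0 a b -> R0 b a -> a = b.
  move=> ab ba.
  have ne : nonempty [pred z | (z == a) || (z == b)] by exists a; rewrite inE eqxx.
  have [z [_ uz]] := wo _ ne.
  have ha : minimum_of R0 [pred z | (z == a) || (z == b)] a.
    split; first by rewrite inE eqxx.
    by move=> w; rewrite inE => /orP[/eqP->|/eqP->].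
  have hb : minimum_of R0 [pred z | (z == a) || (z == b)] b.
    split; first by rewrite inE eqxx orbT.
    by move=> w; rewrite inE => /orP[/eqP->|/eqP->].
  by rewrite -(uz _ ha) -(uz _ hb).
pose lt a b := R0 a b /\ a <> b.
have wf : well_founded lt.
  move=> a; apply: contrapT => na.
  have [z [nz h]] := minP (fun z => ~ Acc lt z) (ex_intro _ a na).
  apply: nz; constructor => y [yz neq]; apply: contrapT => ny.
  by apply: neq; apply: anti => //; apply: h.
pose S a := exists g : I -> I, injective g /\ forall i, lt (g i) a.
have [J [c [cinj [cJ N]]]] : exists (J : set I) (c : I -> I), injective c /\
    (forall i, J (c i)) /\ (forall j, J j -> ~ S j).
  case: (pselect (exists a, S a)) => [exS|nS].
    have [al [[g [ginj glt]] alm]] := minP S exS.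
    exists (fun j => lt j al), g; split => //; split => //.
    move=> j [jal jne] Sj; apply: jne; apply: anti => //; exact: alm.
  exists setT, id; split => // ; split => // j _ Sj; apply: nS; by exists j.
exists J, c; split => //; split => // G C hC.
pose F (j : I) (rec : forall k, lt k j -> X) : X :=
  epsilon (inhabits x0) (fun z => C j z /\ forall k (h : lt k j), z <> rec k h).
pose x := Fix wf (fun _ => X) F.
have xE j : x j = F j (fun k _ => x k).
  rewrite /x Fix_eq //= => a f g fg.
  by have -> : f = g by apply: functional_extensionality_dep => k; apply: functional_extensionality_dep.
have xP j : J j -> G j -> C j (x j) /\ forall k, lt k j -> x j <> x k.
  move=> Jj Gj; rewrite xE.
  have : exists z, C j z /\ forall k (h : lt k j), z <> x k.
    apply: contrapT => nex; apply: (N j Jj).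
    have [e [einj eC]] := hC j Jj Gj.
    have he i : exists k, lt k j /\ e i = x k.
      apply: contrapT => nk; apply: nex; exists (e i); split => // k h ek.
      by apply: nk; exists k.
    exists (fun i => epsilon (inhabits i) (fun k => lt k j /\ e i = x k)).
    split.
      move=> i i' eq.
      have [_ h1] := epsilon_spec (inhabits i) _ (he i).
      have [_ h2] := epsilon_spec (inhabits i') _ (he i').
      by apply: einj; rewrite h1 h2 eq.
    by move=> i; have [] := epsilon_spec (inhabits i) _ (he i).
  move=> ex; have [h1 h2] := epsilon_spec (inhabits x0) _ ex.
  by split => // k h; apply: h2.
exists x; split; first by move=> j Jj Gj; have [] := xP j Jj Gj.
move=> j j' Jj Gj Jj' Gj' xjj'; apply: contrapT => ne.
case: (tot j j') => h.
  by have [_ /(_ j (conj h ne))] := xP j' Jj' Gj'; apply; rewrite xjj'.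
have ne' : j' <> j by move=> e; apply: ne.
by have [_ /(_ j' (conj h ne'))] := xP j Jj Gj; apply.
Qed.
End Transfinite.

Section Scheme.
Variables (R : realType) (P : set (cplx R)) (hP : perfect P).

Lemma ballE (x y : cplx R) e : ball x e y = (`|x - y| < e).
Proof. by rewrite -ball_normE. Qed.

Definition p0 : cplx R := epsilon (inhabits (0, 0)) P.
Lemma p0P : P p0.
Proof. by have [[z Pz] _] := hP; exact: (epsilon_spec _ _ (ex_intro _ z Pz)). Qed.

Definition pick (c : cplx R) (r : R) : cplx R :=
  epsilon (inhabits c) (fun z => P z /\ z != c /\ `|c - z| < r / 2).

Lemma pickP {c r} : P c -> 0 < r -> P (pick c r) /\ pick c r != c /\ `|c - pick c r| < r / 2.
Proof.
move=> Pc r0; rewrite /pick; apply: (epsilon_spec (inhabits c) (fun z => P z /\ z != c /\ `|c - z| < r / 2)).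
have [_ [_ lp]] := hP.
have : limit_point P c by rewrite lp.
move=> /(_ (ball c (r / 2))) [].
  by apply: nbhsx_ballx; rewrite divr_gt0.
by move=> y [yc Py byc]; exists y; split => //; split => //; rewrite -ballE.
Qed.

Definition child (cr : cplx R * R) (b : bool) : cplx R * R :=
  let c' := pick cr.1 cr.2 in
  (if b then c' else cr.1, Num.min (cr.2 / 4) (`|cr.1 - c'| / 4)).

Fixpoint node (u : seq bool) : cplx R * R :=
  if u is b :: u' then child (node u') b else (p0, 1).

Lemma node_inv u : P (node u).1 /\ 0 < (node u).2.
Proof.
elim: u => [|b u [Pc r0]] /=; first by split => //; exact: p0P.
have [Pp [pc dp]] := pickP Pc r0.
split; first by case: b.
rewrite lt_min !divr_gt0 // normr_gt0 subr_eq0 eq_sym //.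
Qed.

Lemma child_le cr b : (child cr b).2 <= cr.2 / 4.
Proof. by rewrite /= ge_min lexx. Qed.

Lemma child_sub u b : ball (node (b :: u)).1 (2 * (node (b :: u)).2) `<=` ball (node u).1 (node u).2.
Proof.
have [Pc r0] := node_inv u.
have [Pp [pc dp]] := pickP Pc r0.
move=> z; rewrite /= !ballE => hz.
set c := (node u).1 in Pc Pp pc dp hz *; set r := (node u).2 in r0 Pp pc dp hz *.
have hd : Num.min (r / 4) (`|c - pick c r| / 4) <= r / 4 by rewrite ge_min lexx.
rewrite (le_lt_trans (ler_distD (if b then pick c r else c) _ _)) //.
have h1 : `|c - (if b then pick c r else c)| < r / 2.
  by case: (b) => //; rewrite subrr normr0 divr_gt0.
move: hz hd h1; set m := Num.min _ _; lra.
Qed.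

Lemma sibling_disj u b b' z : b != b' ->
  ball (node (b :: u)).1 (2 * (node (b :: u)).2) z ->
  ball (node (b' :: u)).1 (2 * (node (b' :: u)).2) z -> False.
Proof.
have [Pc r0] := node_inv u.
have [Pp [pc dp]] := pickP Pc r0.
rewrite !ballE /=.
set c := (node u).1 in Pc Pp pc dp *; set r := (node u).2 in r0 Pp pc dp *.
set m := Num.min _ _.
have hm : m <= `|c - pick c r| / 4 by rewrite ge_min lexx orbT.
have key : `|c - pick c r| < 4 * m -> False by lra.
move=> bb' h1 h2; apply: key.
have tri := ler_distD z c (pick c r).
rewrite [`|z - _|]distrC in tri.
by case: b b' bb' h1 h2 => -[] //= h1 h2; lra.
Qed.

Fixpoint pre (a : nat -> bool) (n : nat) : seq bool :=
  if n is m.+1 then a m :: pre a m else [::].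
Definition X a n := (node (pre a n)).1.
Definition rr a n := (node (pre a n)).2.

Lemma rr_gt0 a n : 0 < rr a n.
Proof. exact: (node_inv _).2. Qed.

Lemma rr_le a n : rr a n <= ((n.+1)%:R)^-1.
Proof.
elim: n => [|n IH]; first by rewrite /rr /= invr1.
apply: (le_trans (child_le _ _)).
have h : (n.+1%:R)^-1 / 4 <= (n.+2%:R)^-1 :> R.
  rewrite -invfM lef_pV2 ?posrE ?mulr_gt0 // -[n.+2]addn1 -[n.+1]addn1 !natrD.
  have : 0 <= n%:R :> R by [].
  lra.
apply: le_trans h; rewrite ler_pdivlMr // divfK //; exact: IH.
Qed.

Lemma small (e : R) : 0 < e -> exists N, ((N.+1)%:R)^-1 < e.
Proof.
move=> e0; exists (Num.trunc e^-1); have := truncnS_gt e^-1; set N := Num.trunc _ => hN.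
by rewrite -[e]invrK ltf_pV2 ?posrE ?invr_gt0.
Qed.

Lemma rr_small a e : 0 < e -> exists N, rr a N < e.
Proof. by move=> /small [N hN]; exists N; exact: le_lt_trans (rr_le a N) hN. Qed.

Lemma X_nested a n k : ball (X a (n + k)) (rr a (n + k)) `<=` ball (X a n) (rr a n).
Proof.
elim: k => [|k IH]; first by rewrite addn0.
apply: subset_trans IH; rewrite addnS.
apply: subset_trans (child_sub _ _).
apply: le_ball; have := rr_gt0 a (n + k).+1; rewrite /rr /=; lra.
Qed.

Lemma X_in a n m : (n <= m)%N -> ball (X a n) (rr a n) (X a m).
Proof.
move=> /subnKC <-; apply: X_nested; exact: ballxx (rr_gt0 _ _).
Qed.

Lemma X_cluster a : exists L : cplx R, cluster (X a @ \oo) L.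
Proof.
pose U := `[(X a 0).1 - 1, (X a 0).1 + 1]%classic `*` `[(X a 0).2 - 1, (X a 0).2 + 1]%classic.
have cU : compact U.
  exact: compact_setX (@segment_compact _ _ _) (@segment_compact _ _ _).
have FU : (X a @ \oo) U.
  exists 0%N => // m _ /=.
  have := X_in a 0 m (leq0n m); rewrite /rr /= => -[h1 h2].
  move: h1 h2; rewrite -!ball_normE /= /U /=.
  move=> h1 h2; split; rewrite in_itv /=; apply/andP; split;
    move: h1 h2; rewrite ?ltr_norml => /andP[] ? ? /andP[] ? ?; lra.
have [L [_ hL]] := cU _ _ FU.
by exists L.
Qed.

Definition phi a : cplx R := epsilon (inhabits (0, 0)) (cluster (X a @ \oo)).

Lemma phi_cluster a : cluster (X a @ \oo) (phi a).
Proof. have [L hL] := X_cluster a; exact: (epsilon_spec _ _ (ex_intro _ L hL)). Qed.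

Lemma cluster_closed a (C : set (cplx R)) : closed C ->
  (exists N, forall m, (N <= m)%N -> C (X a m)) -> C (phi a).
Proof.
move=> cC [N hN]; apply: cC => B hB.
have := phi_cluster a C B; apply => //.
by exists N.
Qed.

Lemma phi_ball2 a n : ball (X a n.+1) (2 * rr a n.+1) (phi a).
Proof.
have h : closed_ball (X a n.+1) (rr a n.+1) (phi a).
  apply: cluster_closed; first exact: closed_ball_closed.
  exists n.+1 => m hm; apply: subset_closed_ball; exact: X_in.
have := @subset_closure_half _ _ (X a n.+1) (2 * rr a n.+1).
rewrite mulrAC divff ?mul1r //; apply; last exact: h.
by rewrite mulr_gt0 // rr_gt0.
Qed.

Lemma phi_ball a n : ball (X a n) (rr a n) (phi a).
Proof. exact: (child_sub (pre a n) (a n) _ (phi_ball2 a n)). Qed.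

Lemma phi_P a : P (phi a).
Proof.
have [_ [cP _]] := hP.
apply: cluster_closed => //.
by exists 0%N => m _; exact: (node_inv _).1.
Qed.

Lemma pre_eq a a' n : (forall i, (i < n)%N -> a i = a' i) -> pre a n = pre a' n.
Proof.
elim: n => [//|n IH] h /=.
by rewrite h // IH // => i hi; apply: h; apply: ltnW.
Qed.

Lemma phi_close a a' n : (forall i, (i < n)%N -> a i = a' i) ->
  `|phi a - phi a'| < 2 * rr a n.
Proof.
move=> h.
have h1 := phi_ball a n; have h2 := phi_ball a' n.
rewrite /X /rr -(pre_eq _ _ _ h) in h2.
move: h1 h2; rewrite !ballE /X /rr.
have tri := ler_distD (node (pre a n)).1 (phi a) (phi a').
rewrite (distrC (phi a) (node (pre a n)).1) in tri.
lra.
Qed.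

Lemma phi_inj : injective phi.
Proof.
move=> a a' e; apply: funext => k; apply: contrapT => nk.
have ex : exists n, a n != a' n by exists k; apply/eqP.
case: (ex_minnP ex) => n hn hmin.
have hlt i : (i < n)%N -> a i = a' i.
  move=> hi; apply/eqP; apply: contraTT hi; rewrite -leqNgt; exact: hmin.
have h1 := phi_ball2 a n; have h2 := phi_ball2 a' n.
rewrite /X /rr /= -(pre_eq _ _ _ hlt) -e in h2.
exact: (sibling_disj _ _ _ _ hn h1 h2).
Qed.

Definition cyl (a : cantor_space) N := [set a' : cantor_space | forall i, (i < N)%N -> a' i = a i].

Lemma cyl_open a N : open (cyl a N).
Proof.
elim: N => [|N IH].
  by rewrite (_ : cyl a 0 = setT); [exact: openT|apply/seteqP; split].
rewrite (_ : cyl a N.+1 = cyl a N `&` (proj N @^-1` [set a N])).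
  apply: openI => //; apply: open_comp; last exact: discrete_open.
  by move=> x _; exact: proj_continuous.
apply/seteqP; split => x /=.
  by move=> h; split; [move=> i hi; apply: h; apply: ltnW|apply: h].
move=> [h1 h2] i; rewrite ltnS leq_eqVlt => /orP[/eqP->|]; [exact: h2|exact: h1].
Qed.

Lemma cyl_nbhs a N : nbhs a (cyl a N).
Proof. by apply: open_nbhs_nbhs; split; [exact: cyl_open|]. Qed.

Lemma phi_cont : continuous (phi : cantor_space -> cplx R).
Proof.
move=> a U /= /nbhs_ballP [e e0 hU].
have [N hN] := rr_small a (e / 2) (divr_gt0 e0 (ltr0Sn _ 1)).
apply: (filterS _ (cyl_nbhs a N)) => a' ha' /=.
apply: hU; rewrite ballE.
have := phi_close a a' N (fun i hi => esym (ha' i hi)).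
lra.
Qed.

Definition K (s : nat -> bool) := [set a : cantor_space | forall m, a m.*2 = s m].
Definition Q s : set (cplx R) := (phi : cantor_space -> cplx R) @` K s.

Lemma K_closed s : closed (K s).
Proof.
move=> a ha m.
have [a' [Ka' ca']] := ha _ (cyl_nbhs a m.*2.+1).
by rewrite -(ca' m.*2 (ltnSn _)); exact: Ka'.
Qed.

Lemma Q_closed s : closed (Q s).
Proof.
apply: compact_closed; first exact: norm_hausdorff.
apply: continuous_compact; first exact: continuous_subspaceT phi_cont.
apply: subclosed_compact (K_closed s) cantor_space_compact _ => //.
Qed.

Lemma Q_perfect s : perfect (Q s).
Proof.
split.
  exists (phi (fun n => if odd n then false else s n./2)).
  exists (fun n => if odd n then false else s n./2) => // m.
  by rewrite odd_double doubleK.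
split; first exact: Q_closed.
apply/seteqP; split => x.
  move=> hx; apply: Q_closed => U hU.
  by have [y [_ Qy Uy]] := hx U hU; exists y.
move=> [a Ka <-] U /nbhs_ballP [e e0 hU].
have [N hN] := rr_small a (e / 2) (divr_gt0 e0 (ltr0Sn _ 1)).
pose a' := fun i => if i == N.*2.+1 then ~~ a i else a i.
have ha' i : (i < N)%N -> a i = a' i.
  move=> hi; rewrite /a'; case: eqP => // ei; exfalso; move: hi; rewrite ei.
  by rewrite -addnn; lia.
exists (phi a'); split.
- apply/eqP => e'; have := phi_inj _ _ e' => /(congr1 (fun f => f N.*2.+1)).
  by rewrite /a' eqxx; case: (a _).
- exists a' => // m; rewrite /a'; case: eqP => [e1|_]; last exact: Ka.
  by exfalso; move: (congr1 odd e1); rewrite odd_double /= odd_double.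
- apply: hU; rewrite ballE.
  have := phi_close a a' N ha'; lra.
Qed.

Lemma Q_sub s : Q s `<=` P.
Proof. by move=> x [a _ <-]; exact: phi_P. Qed.

Lemma Q_disj s s' x : Q s x -> Q s' x -> s = s'.
Proof.
move=> [a Ka <-] [a' Ka' e]; have aa' := phi_inj _ _ e.
by apply: funext => m; rewrite -Ka -Ka' aa'.
Qed.

Lemma cantor_in_perfect_sec (B : set (cplx R)) : bernstein B ->
  exists e : (nat -> bool) -> cplx R, injective e /\ forall i, B (e i) /\ P (e i).
Proof.
move=> bB.
pose e s := epsilon (inhabits ((0, 0) : cplx R)) (B `&` Q s).
have eP s : (B `&` Q s) (e s).
  have [[z hz] _] := bB _ (Q_perfect s).
  exact: (epsilon_spec _ _ (ex_intro _ z hz)).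
exists e; split.
  move=> s s' ee; have [_ h1] := eP s; have [_ h2] := eP s'.
  rewrite ee in h1; exact: Q_disj h1 h2.
by move=> s; have [h1 h2] := eP s; split => //; exact: Q_sub h2.
Qed.

End Scheme.

Section Encode.
Variable R : realType.

Definition rc (x : R) : nat -> bool := fun n =>
  if @unpickle rat n is Some q then (ratr q < x) else false.

Definition cc (S : set (cplx R)) : nat -> bool := fun n =>
  if @unpickle (rat * rat * rat)%type n is Some (q1, q2, r) then
    `[< forall z, S z -> ~ ball ((ratr q1, ratr q2) : cplx R) (ratr r) z >]
  else false.

Definition enc (p : set (cplx R) * cplx R) : nat -> bool := fun n =>
  match (n %% 3)%N with
  | 0 => cc p.1 (n %/ 3)
  | 1 => rc p.2.1 (n %/ 3)
  | _ => rc p.2.2 (n %/ 3)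
  end.

Lemma rc_inj : injective rc.
Proof.
have key x y : x < y -> rc x <> rc y.
  move=> xy; have [q] := rat_in_itvoo xy; rewrite in_itv /= => /andP[h1 h2].
  move=> /(congr1 (fun f => f (pickle q))); rewrite /rc pickleK.
  by rewrite h2 ltNge (ltW h1).
move=> x y e; case: (ltgtP x y) => // h; first by case: (key _ _ h).
by case: (key _ _ h).
Qed.

Lemma cc_sub (S T : set (cplx R)) : closed T -> cc S = cc T -> S `<=` T.
Proof.
move=> cT eST z Sz; apply: contrapT => nTz.
have : nbhs z (~` T) by apply: open_nbhs_nbhs; split => //; exact: closed_openC.
move=> /nbhs_ballP [e e0 he].
have e20 : 0 < e / 2 by rewrite divr_gt0.
have [r] := rat_in_itvoo e20; rewrite in_itv /= => /andP[r0 re].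
have [q1] : exists q1, ratr q1 \in `]z.1 - ratr r, z.1 + ratr r[ by apply: rat_in_itvoo; lra.
rewrite in_itv /= => /andP[a1 b1].
have [q2] : exists q2, ratr q2 \in `]z.2 - ratr r, z.2 + ratr r[ by apply: rat_in_itvoo; lra.
rewrite in_itv /= => /andP[a2 b2].
have := congr1 (fun f => f (pickle (q1, q2, r))) eST; rewrite /cc pickleK /=.
have bz : ball ((ratr q1, ratr q2) : cplx R) (ratr r) z.
  split; rewrite /= -ball_normE /= ltr_distlC; apply/andP; split; lra.
rewrite (_ : `[< _ >] = false); last first.
  by apply/negbTE/negP => /asboolP h; exact: h z Sz bz.
move=> /esym/negbT/asboolPn H; apply: H => w Tw bw.
apply: (he w) => //.
have := ball_triangle (ball_sym bz) bw.
by apply: le_ball; lra.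
Qed.

Lemma encode_inj p q : closed p.1 -> closed q.1 -> enc p = enc q -> p = q.
Proof.
case: p q => [S [x1 x2]] [T [y1 y2]] /= cS cT e.
have h k m : (k < 3)%N -> enc (S, (x1, x2)) (m * 3 + k) = enc (T, (y1, y2)) (m * 3 + k) by rewrite e.
have Em k m : (k < 3)%N -> ((m * 3 + k) %% 3 = k)%N by move=> hk; rewrite modnMDl modn_small.
have Ed k m : (k < 3)%N -> ((m * 3 + k) %/ 3 = m)%N by move=> hk; rewrite divnMDl // divn_small // addn0.
have eST : cc S = cc T by apply: funext => m; have := h 0%N m isT; rewrite /enc !(Em 0%N m) // !(Ed 0%N m).
have ex1 : rc x1 = rc y1 by apply: funext => m; have := h 1%N m isT; rewrite /enc !(Em 1%N m) // !(Ed 1%N m).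
have ex2 : rc x2 = rc y2 by apply: funext => m; have := h 2%N m isT; rewrite /enc !(Em 2%N m) // !(Ed 2%N m).
rewrite (rc_inj _ _ ex1) (rc_inj _ _ ex2); congr (_, _).
by apply/seteqP; split; apply: cc_sub.
Qed.

End Encode.


Lemma encode (R : realType) : exists e : set (cplx R) * cplx R -> (nat -> bool),
  forall p q, closed p.1 -> closed q.1 -> e p = e q -> p = q.
Proof. by exists (@enc R); exact: encode_inj. Qed.

Lemma cantor_in_perfect (R : realType) (B : set (cplx R)) : bernstein B ->
  forall P, perfect P -> exists e : (nat -> bool) -> cplx R,
    injective e /\ forall i, B (e i) /\ P (e i).
Proof. by move=> bB P hP; exact: (@cantor_in_perfect_sec R P hP B bB). Qed.

Theorem proposition3p3 (R : realType) (B : set (cplx R)) :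
  bernstein B ->
  exists f : cplx R -> cplx R,
    perfectly_everywhere_surjective f /\
    (forall x : cplx R, ~ B x -> f x = cone R).
Proof.
move=> bB.
have [J [c [cinj [cJ H]]]] := @transfinite (nat -> bool) _ ((0%R, 0%R) : cplx R).
have [enc encinj] := encode R.
pose good j := exists p : set (cplx R) * cplx R, perfect p.1 /\ c (enc p) = j.
pose pj j := epsilon (inhabits ((setT, (0%R, 0%R)) : set (cplx R) * cplx R))
  (fun p : set (cplx R) * cplx R => perfect p.1 /\ c (enc p) = j).
have pjP p : perfect p.1 -> pj (c (enc p)) = p.
  move=> hp.
  have [hp' e] := epsilon_spec (inhabits ((setT, (0%R, 0%R)) : set (cplx R) * cplx R))
     (fun q : set (cplx R) * cplx R => perfect q.1 /\ c (enc q) = c (enc p)) (ex_intro _ p (conj hp erefl)).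
  apply: encinj; [exact: hp'.2.1|exact: hp.2.1|exact: cinj].
have pjG j : good j -> perfect (pj j).1 /\ c (enc (pj j)) = j.
  by move=> [p [hp <-]]; rewrite pjP.
have [x [xC xinj]] := H good (fun j z => B z /\ (pj j).1 z)
  (fun j _ gj => @cantor_in_perfect R B bB _ (pjG j gj).1).
have goodJ j : good j -> J j by move=> [p [_ <-]].
pose f z := if pselect (exists j, good j /\ x j = z) is left ex
  then (pj (epsilon (inhabits (fun _ : nat => false)) (fun j => good j /\ x j = z))).2 else cone R.
have fx j : good j -> f (x j) = (pj j).2.
  move=> gj; rewrite /f; case: pselect => [ex|nex]; last by exfalso; apply: nex; exists j.
  have [gk xk] := epsilon_spec (inhabits (fun _ : nat => false)) (fun k => good k /\ x k = x j) ex.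
  by rewrite (xinj _ _ (goodJ _ gk) gk (goodJ _ gj) gj xk).
exists f; split.
  move=> P hP; apply/seteqP; split => // y _.
  pose j := c (enc (P, y)).
  have gj : good j by exists (P, y).
  have pjj : pj j = (P, y) by exact: pjP.
  exists (x j); last by rewrite fx // pjj.
  by have [_] := xC j (goodJ _ gj) gj; rewrite pjj.
move=> z nBz; rewrite /f; case: pselect => // -[j [gj xj]].
by exfalso; apply: nBz; rewrite -xj; have [] := xC j (goodJ _ gj) gj.
Qed.
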